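(* Let $n\ge 1$ and let $0 \leq m \leq n-1$ be an integer. Then there exist a real normed space $X$ with $\dim X=n$ and a linear subspace $Y\subseteq X$ with $\dim Y=n-1$ such that $\dim \mathcal{P}_{\min}(X, Y)=m$. Moreover, if $0 \leq m \leq n-3$, then $X$ and $Y$ can be chosen so that in addition $\lambda(Y, X) > 1$.
   Context: A projection onto $Y$ is a linear $P:X\to Y$ with $P|_Y=\mathrm{id}_Y$; $\lambda(Y,X)$ is the infimum of the operator norms of such projections and $\mathcal{P}_{\min}(X,Y)$ is the set of projections of norm $\lambda(Y,X)$. $\dim \mathcal{P}_{\min}(X,Y)$ is the affine dimension of this convex subset of the space $\mathcal{L}(X,X)$ of linear operators on $X$ (the smallest dimension of an affine subspace containing it). *)

(* Defs.v *)
From HB Require Import structures.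
From mathcomp Require Import all_boot all_order all_algebra.
From mathcomp Require Import boolp classical_sets reals.
Set Implicit Arguments. Unset Strict Implicit. Unset Printing Implicit Defensive.
Import Order.TTheory GRing.Theory Num.Theory.
Local Open Scope ring_scope.
Local Open Scope classical_set_scope.

(* An n-dimensional real normed space is modelled as 'rV[R]_n with a norm N.
   Linear operators on X are n x n matrices acting on the right: v |-> v *m A. *)
Definition is_norm (R : realType) (n : nat) (N : 'rV[R]_n -> R) : Prop :=
  [/\ forall x, 0 <= N x,
      forall x, N x = 0 -> x = 0,
      forall (a : R) x, N (a *: x) = `|a| * N x &
      forall x y, N (x + y) <= N x + N y].

Definition opnorm (R : realType) (n : nat) (N : 'rV[R]_n -> R) (A : 'M[R]_n) : R :=
  sup [set N (v *m A) | v in [set v | N v <= 1]].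

Definition is_projection (R : realType) (n : nat) (Y : 'M[R]_n) (P : 'M[R]_n) : Prop :=
  (forall v : 'rV[R]_n, (v *m P <= Y)%MS) /\
  (forall y : 'rV[R]_n, (y <= Y)%MS -> y *m P = y).

Definition proj_const (R : realType) (n : nat) (N : 'rV[R]_n -> R) (Y : 'M[R]_n) : R :=
  inf [set opnorm N P | P in [set P | is_projection Y P]].

Definition Pmin (R : realType) (n : nat) (N : 'rV[R]_n -> R) (Y : 'M[R]_n)
  : set 'M[R]_n :=
  [set P | is_projection Y P /\ opnorm N P = proj_const N Y].

Definition in_affine_of_dim (R : realType) (n : nat) (S : set 'M[R]_n) (d : nat) : Prop :=
  exists (P0 : 'M[R]_n) (V : 'M[R]_(n * n)),
    \rank V = d /\ forall P, S P -> (mxvec (P - P0) <= V)%MS.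

(* The affine dimension of S equals d (d >= 0, so S is nonempty; the empty set
   has affine dimension -1 by convention). *)
Definition affine_dim_eq (R : realType) (n : nat) (S : set 'M[R]_n) (d : nat) : Prop :=
  S !=set0 /\ in_affine_of_dim S d /\
  forall d', in_affine_of_dim S d' -> (d <= d')%N.

(* Main.v *)
Require Import Defs.
From HB Require Import structures.
From mathcomp Require Import all_boot all_order all_algebra.
From mathcomp Require Import boolp classical_sets reals.
From mathcomp Require Import ring lra zify.
Import Order.TTheory GRing.Theory Num.Theory.
Local Open Scope ring_scope.
Local Open Scope classical_set_scope.
Set Implicit Arguments. Unset Strict Implicit. Unset Printing Implicit Defensive.
Section Gen.
Variables (R : realType) (n : nat).

Definition Pz (f : 'cV[R]_n) (z : 'rV[R]_n) : 'M[R]_n := 1%:M - f *m z.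

Lemma Pz_act f z (v : 'rV[R]_n) : v *m Pz f z = v - (v *m f) *m z.
Proof. by rewrite /Pz mulmxBr mulmx1 mulmxA. Qed.

Lemma proj_Pz f z : z *m f = 1%:M -> is_projection (kermx f) (Pz f z).
Proof.
move=> zf; split.
  move=> v; rewrite sub_kermx Pz_act mulmxBl -[(_ *m z) *m f]mulmxA zf mulmx1 subrr //.
move=> y; rewrite sub_kermx => /eqP yf; by rewrite Pz_act yf mul0mx subr0.
Qed.

Lemma proj_inv (f : 'cV[R]_n) (p : 'I_n) (P : 'M[R]_n) : f p 0 = 1 -> is_projection (kermx f) P ->
  exists z, z *m f = 1%:M /\ P = Pz f z.
Proof.
move=> fp [HP1 HP2].
set u : 'rV[R]_n := delta_mx 0 p.
have uf : u *m f = 1%:M.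
  apply/matrixP => i j; rewrite !ord1 !mxE (bigD1 p) //= big1 ?addr0.
    by rewrite !mxE !eqxx fp mulr1.
  by move=> k /negbTE kp; rewrite !mxE kp andbF mul0r.
have uPf : u *m P *m f = 0 by apply/eqP; rewrite -sub_kermx.
exists (u - u *m P); split.
  by rewrite mulmxBl uf uPf subr0.
apply/row_matrixP => i; rewrite !rowE Pz_act.
set v := delta_mx 0 i.
have yf : (v - (v *m f) *m u) *m f = 0.
  by rewrite mulmxBl -[(_ *m u) *m f]mulmxA uf mulmx1 subrr.
have yY : ((v - (v *m f) *m u) <= kermx f)%MS by rewrite sub_kermx yf.
have := HP2 _ yY; rewrite mulmxBl => e.
have -> : v *m P = (v - (v *m f) *m u) *m P + (v *m f) *m (u *m P).
  by rewrite mulmxBl mulmxA subrK.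
rewrite mulmxBl e mulmxBr !mulmxA opprB.
set a := _ *m u; set b := _ *m P. by rewrite addrA addrAC.
Qed.
End Gen.
Section Op.
Variables (R : realType) (n : nat) (N : 'rV[R]_n -> R).
Hypothesis HN : is_norm N.

Lemma N0 : N 0 = 0.
Proof. case: HN => _ _ Hh _; by rewrite -(scale0r (0 : 'rV[R]_n)) Hh normr0 mul0r. Qed.

Lemma Nge0 v : 0 <= N v. Proof. by case: HN. Qed.

Lemma N_sum (I : Type) (r : seq I) (F : I -> 'rV[R]_n) :
  N (\sum_(i <- r) F i) <= \sum_(i <- r) N (F i).
Proof.
elim: r => [|a r IH]; first by rewrite !big_nil N0.
rewrite !big_cons; case: HN => _ _ _ Ht.
by apply: le_trans (Ht _ _) _; rewrite lerD2l.
Qed.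

Lemma N_bound u : N u <= \sum_j `|u 0 j| * N (delta_mx 0 j).
Proof.
rewrite {1}(row_sum_delta u); apply: le_trans (N_sum _ _) _.
by apply: ler_sum => j _; case: HN => _ _ Hh _; rewrite Hh.
Qed.

Definition opset (A : 'M[R]_n) := [set N (v *m A) | v in [set v | N v <= 1]].

Lemma opnorm_le A B : (forall v, N v <= 1 -> N (v *m A) <= B) -> opnorm N A <= B.
Proof.
move=> H; apply: ge_sup.
  by exists (N (0 *m A)); exists 0 => //=; rewrite N0 ler01.
by move=> x [v vN <-]; apply: H.
Qed.

Hypothesis Hcoord : forall (w : 'rV[R]_n) i, `|w 0 i| <= N w.

Lemma opnorm_ge A v : N v <= 1 -> N (v *m A) <= opnorm N A.
Proof.
move=> Hv; apply: (@ub_le_sup _ (opset A)); last by exists v.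
exists (\sum_j (\sum_i `|A i j|) * N (delta_mx 0 j)) => x [w /= Hw <-].
apply: le_trans (N_bound _) _; apply: ler_sum => j _.
apply: ler_wpM2r; first exact: Nge0.
rewrite mxE; apply: le_trans (ler_norm_sum _ _ _) _.
apply: ler_sum => i _; rewrite normrM.
by apply: ler_piMl => //; apply: le_trans (Hcoord w i) Hw.
Qed.

Lemma opnorm_ge1 A (v : 'rV[R]_n) : v != 0 -> v *m A = v -> 1 <= opnorm N A.
Proof.
move=> v0 vA.
have Nv : 0 < N v.
  rewrite lt_def Nge0 andbT; apply/eqP => H; case: HN => _ Hd _ _.
  by move/eqP: v0; apply; apply: Hd.
have Hw : N ((N v)^-1 *: v) = 1.
  by case: HN => _ _ Hh _; rewrite Hh ger0_norm ?invr_ge0 ?Nge0 // mulVf // gt_eqF.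
apply: le_trans (opnorm_ge A (_ : N ((N v)^-1 *: v) <= 1)); last by rewrite Hw.
by rewrite -scalemxAl vA Hw.
Qed.

Lemma proj_const_min (Y P0 : 'M[R]_n) : is_projection Y P0 ->
  (forall P, is_projection Y P -> opnorm N P0 <= opnorm N P) ->
  proj_const N Y = opnorm N P0.
Proof.
move=> HP0 Hmin; apply/le_anti/andP; split.
  apply: ge_inf; last by exists P0.
  by exists (opnorm N P0) => x [P HP <-]; apply: Hmin.
by apply: lb_le_inf; [exists (opnorm N P0); exists P0|move=> x [P HP <-]; apply: Hmin].
Qed.
End Op.

Lemma aux (V : zmodType) (x a b : V) : x - (a + b) - (x - a) = - b.
Proof. by rewrite opprD addrA addrAC opprB subrKA addrAC subrr add0r. Qed.

Section Main.
Variables (R : realType) (n : nat) (N : 'rV[R]_n -> R) (f : 'cV[R]_n) (p : 'I_n).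
Hypothesis fp : f p 0 = 1.

Definition Mf : 'M[R]_(n, n * n) := lin1_mx (mxvec \o mulmx f).
Lemma MfE (d : 'rV[R]_n) : d *m Mf = mxvec (f *m d).
Proof. by rewrite mul_rV_lin1. Qed.

Lemma Mf_free : row_free Mf.
Proof.
apply: inj_row_free => v; rewrite MfE => H.
have H2 : f *m v = 0 by rewrite -(mxvecK (f *m v)) H linear0.
apply/rowP => j; have := congr1 (fun A : 'M[R]_n => A p j) H2.
by rewrite !mxE big_ord1 fp mul1r.
Qed.

Lemma rank_ker : \rank (kermx f) = n.-1.
Proof.
rewrite mxrank_ker; have -> : \rank f = 1%N; last by rewrite subn1.
apply/eqP; rewrite eqn_leq rank_leq_col /= lt0n mxrank_eq0.
by apply/eqP => f0; move: fp; rewrite f0 mxE => /eqP; rewrite eq_sym oner_eq0.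
Qed.

Lemma row_pid (m : nat) (r : 'I_n) :
  row r (pid_mx m : 'M[R]_n) = if (r < m)%N then delta_mx 0 r else 0.
Proof.
apply/rowP => j; rewrite !mxE; case: ifP => rm; rewrite !mxE ?eqxx /=.
  by rewrite ?rm ?andbT eq_sym.
by rewrite ?rm ?andbF.
Qed.

Lemma pid_fix (m : nat) (d : 'rV[R]_n) : (forall j : 'I_n, (m <= j)%N -> d 0 j = 0) ->
  d *m pid_mx m = d.
Proof.
move=> Hd; apply/rowP => j; rewrite mxE (bigD1 j) //= big1 ?addr0.
  rewrite mxE eqxx /=; case: ltnP => jm; first by rewrite mulr1.
  by rewrite Hd // mul0r.
by move=> k /negbTE kj; rewrite mxE val_eqE kj /= mulr0.
Qed.

Variables (z0 : 'rV[R]_n) (m : nat) (eps : R).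
Hypotheses (Hz0 : z0 *m f = 1%:M) (Heps : 0 < eps) (Hm : (m <= n)%N)
  (Hf : forall j : 'I_n, (j < m)%N -> f j 0 = 0)
  (H1 : forall z, z *m f = 1%:M -> opnorm N (Pz f z0) <= opnorm N (Pz f z))
  (H2 : forall z, z *m f = 1%:M -> opnorm N (Pz f z) <= opnorm N (Pz f z0) ->
        forall j : 'I_n, (m <= j)%N -> z 0 j = z0 0 j)
  (H3 : forall j : 'I_n, (j < m)%N ->
        opnorm N (Pz f (z0 + eps *: delta_mx 0 j)) <= opnorm N (Pz f z0)).

Lemma PC : proj_const N (kermx f) = opnorm N (Pz f z0).
Proof.
apply: proj_const_min; first exact: proj_Pz.
by move=> P /(proj_inv fp) [z [zf ->]]; apply: H1.
Qed.

Lemma z1f (j : 'I_n) : (j < m)%N -> (z0 + eps *: delta_mx 0 j) *m f = 1%:M.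
Proof.
move=> jm; rewrite mulmxDl Hz0 -scalemxAl.
have -> : (delta_mx 0 j : 'rV[R]_n) *m f = 0; last by rewrite scaler0 addr0.
apply/matrixP => a b; rewrite !ord1 !mxE (bigD1 j) //= big1 ?addr0.
  by rewrite !mxE !eqxx Hf // mulr0.
by move=> k /negbTE kj; rewrite !mxE kj mul0r.
Qed.

Lemma Pmin_z1 (j : 'I_n) : (j < m)%N -> Pmin N (kermx f) (Pz f (z0 + eps *: delta_mx 0 j)).
Proof.
move=> jm; split; first by apply: proj_Pz; apply: z1f.
rewrite PC; apply/le_anti; rewrite H3 //= H1 //; exact: z1f.
Qed.

Lemma Pmin_z0 : Pmin N (kermx f) (Pz f z0).
Proof. by split; [apply: proj_Pz | rewrite PC]. Qed.

Lemma affdim : affine_dim_eq (Pmin N (kermx f)) m.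
Proof.
split; first by exists (Pz f z0); exact: Pmin_z0.
split.
  exists (Pz f z0), (<<(pid_mx m : 'M[R]_n) *m Mf>>%MS); split.
    by rewrite genmxE mxrankMfree ?Mf_free // rank_pid_mx.
  move=> P [/(proj_inv fp) [z [zf ->]] HPo].
  have Hle : opnorm N (Pz f z) <= opnorm N (Pz f z0) by rewrite HPo PC.
  have Hz := H2 zf Hle.
  have -> : Pz f z - Pz f z0 = f *m (z0 - z).
    by rewrite /Pz mulmxBr opprB addrC addrA subrK.
  rewrite -MfE -(pid_fix (m := m) (d := z0 - z)).
    by rewrite genmxE -mulmxA submxMl.
  by move=> j jm; rewrite !mxE Hz // subrr.
move=> d' [P0 [V [<- HV]]].
rewrite -{1}(@rank_pid_mx R n n m) // -(mxrankMfree _ Mf_free).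
apply: mxrankS; apply/row_subP => r; rewrite row_mul row_pid.
case: ifP => rm; last by rewrite mul0mx sub0mx.
have A1 := HV _ (Pmin_z1 rm); have A0 := HV _ Pmin_z0.
have : ((mxvec (Pz f (z0 + eps *: delta_mx 0 r) - P0) + (-1) *: mxvec (Pz f z0 - P0))%R <= V)%MS.
  by apply: (addmx_sub A1); apply: scalemx_sub A0.
rewrite scaleN1r -linearB /= opprB subrKA.
have -> : Pz f (z0 + eps *: delta_mx 0 r) - Pz f z0 = (- eps) *: (f *m delta_mx 0 r).
  by rewrite /Pz mulmxDr aux -scalemxAr scaleNr.
rewrite linearZ /= -MfE => H.
have := scalemx_sub (- eps)^-1 H.
by rewrite scalerA mulVf ?scale1r // oppr_eq0 gt_eqF.
Qed.
End Main.

Section Nab.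
Variables (R : realType) (n : nat) (a b : 'I_n -> bool).
Hypothesis Hab : forall i, a i || b i.

Definition Sa (v : 'rV[R]_n) : R := \sum_i (a i)%:R * `|v 0 i|.
Definition Bb (v : 'rV[R]_n) : R := \big[Num.max/0]_i ((b i)%:R * `|v 0 i|).
Definition Nab (v : 'rV[R]_n) : R := Num.max (Sa v) (Bb v).

Lemma Sa_ge0 (v : 'rV[R]_n) : 0 <= Sa v.
Proof. by apply: sumr_ge0 => i _; rewrite mulr_ge0. Qed.

Lemma Bb_ge0 (v : 'rV[R]_n) : 0 <= Bb v.
Proof. by apply: bigmax_ge_id. Qed.

Lemma Sa_ge (v : 'rV[R]_n) i : (a i)%:R * `|v 0 i| <= Sa v.
Proof.
rewrite /Sa (bigD1 i) //= lerDl; apply: sumr_ge0 => j _; by rewrite mulr_ge0.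
Qed.

Lemma Bb_ge (v : 'rV[R]_n) i : (b i)%:R * `|v 0 i| <= Bb v.
Proof. rewrite /Bb; apply: le_bigmax. Qed.

Lemma Nab_coord (v : 'rV[R]_n) i : `|v 0 i| <= Nab v.
Proof.
rewrite /Nab le_max; have := Hab i; case/orP => H.
  by have := Sa_ge v i; rewrite H mul1r => ->.
by have := Bb_ge v i; rewrite H mul1r => ->; rewrite orbT.
Qed.

Lemma Bb_scale (c : R) (v : 'rV[R]_n) : Bb (c *: v) = `|c| * Bb v.
Proof.
rewrite /Bb; elim/big_rec2: _ => [|i y1 y2 _ ->]; first by rewrite mulr0.
by rewrite maxr_pMr // mxE normrM mulrCA.
Qed.

Lemma Sa_scale (c : R) (v : 'rV[R]_n) : Sa (c *: v) = `|c| * Sa v.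
Proof.
rewrite /Sa mulr_sumr; apply: eq_bigr => i _; by rewrite mxE normrM mulrCA.
Qed.

Lemma Nab_norm : is_norm Nab.
Proof.
split.
- by move=> v; rewrite /Nab le_max Sa_ge0.
- move=> v H; apply/rowP => i; rewrite mxE; apply/eqP; rewrite -normr_eq0.
  by rewrite eq_le normr_ge0 andbT -H Nab_coord.
- by move=> c v; rewrite /Nab Sa_scale Bb_scale maxr_pMr.
move=> x y; rewrite /Nab ge_max; apply/andP; split.
  apply: le_trans (_ : Sa x + Sa y <= _); last by apply: lerD; rewrite le_max lexx.
  rewrite /Sa -big_split /=; apply: ler_sum => i _; rewrite -mulrDr mxE.
  by apply: ler_wpM2l => //; apply: ler_normD.
apply: bigmax_le; first by apply: addr_ge0; rewrite le_max Sa_ge0.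
move=> i _; apply: le_trans (_ : Bb x + Bb y <= _); last by apply: lerD; rewrite le_max lexx orbT.
apply: le_trans (_ : (b i)%:R * `|x 0 i| + (b i)%:R * `|y 0 i| <= _); last by apply: lerD; apply: Bb_ge.
by rewrite -mulrDr mxE; apply: ler_wpM2l => //; apply: ler_normD.
Qed.
End Nab.

Lemma cnt n m : (m <= n)%N -> (\sum_(i < n) ((m <= i) : nat))%N = (n - m)%N.
Proof.
move=> Hmn; rewrite -(big_mkord xpredT (fun i => nat_of_bool (m <= i)%N)) (@big_cat_nat _ _ _ m 0 n _ _ (leq0n m) Hmn) /=.
rewrite big_nat_cond big1 ?add0n; last by move=> i /andP[/andP[_ H] _]; rewrite leqNgt H.
rewrite big_nat_cond (eq_bigr (fun _ => 1%N)); last by move=> i /andP[/andP[H _] _]; rewrite H.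
by rewrite -big_nat_cond sum_nat_const_nat muln1.
Qed.

Section Entry.
Variables (R : realType) (n : nat).

Lemma Pz_entry (f : 'cV[R]_n) z (v : 'rV[R]_n) j :
  (v *m Pz f z) 0 j = v 0 j - (\sum_i v 0 i * f i 0) * z 0 j.
Proof. by rewrite Pz_act !mxE big_ord1 mxE. Qed.

Lemma zf_sum (f : 'cV[R]_n) (z : 'rV[R]_n) : z *m f = 1%:M -> \sum_i z 0 i * f i 0 = 1.
Proof. by move/(congr1 (fun A : 'M[R]_1 => A 0 0)); rewrite !mxE. Qed.

Lemma sum_zf (f : 'cV[R]_n) (z : 'rV[R]_n) : \sum_i z 0 i * f i 0 = 1 -> z *m f = 1%:M.
Proof. by move=> H; apply/matrixP => a b; rewrite !ord1 !mxE H. Qed.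
End Entry.

Section CaseA.
Variables (R : realType) (n m : nat).
Hypothesis Hmn : (m + 3 <= n)%N.
Definition kA : R := (n - m)%:R.
Definition fA : 'cV[R]_n := \col_i ((m <= i)%N%:R).
Definition aA : 'I_n -> bool := fun _ => false.
Definition bA : 'I_n -> bool := fun _ => true.
Definition NA := Nab (R := R) aA bA.
Definition cst : R := 2 - 2 / kA.
Definition z0A : 'rV[R]_n := \row_j ((m <= j)%N%:R / kA).
Definition epsA : R := (kA - 2) / (kA * kA).

Lemma HabA i : aA i || bA i. Proof. by []. Qed.
Lemma NA_norm : is_norm NA. Proof. exact: (@Nab_norm R n aA bA HabA). Qed.
Lemma NA_coord (v : 'rV[R]_n) i : `|v 0 i| <= NA v. Proof. exact: (@Nab_coord R n aA bA HabA v i). Qed.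

Lemma fAE i : fA i 0 = (m <= i)%N%:R. Proof. by rewrite mxE. Qed.

Lemma fA1 (i : 'I_n) : (m <= i)%N -> fA i 0 = 1. Proof. by move=> H; rewrite fAE H. Qed.
Lemma fA0 (i : 'I_n) : (i < m)%N -> fA i 0 = 0. Proof. by move=> H; rewrite fAE leqNgt H. Qed.

Lemma k3 : 3 <= kA.
Proof. by rewrite /kA -[3]/(3%:R) ler_nat; lia. Qed.
Lemma kpos : 0 < kA. Proof. by apply: lt_le_trans k3. Qed.
Lemma kneq0 : kA != 0. Proof. by rewrite gt_eqF // kpos. Qed.

Lemma fsum : \sum_i fA i 0 = kA.
Proof.
rewrite (eq_bigr (fun i : 'I_n => ((m <= i)%N : nat)%:R)); last by move=> i _; rewrite fAE.
by rewrite -natr_sum cnt //; lia.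
Qed.

Lemma fsumD (j : 'I_n) : (m <= j)%N -> \sum_(i | i != j) fA i 0 = kA - 1.
Proof. move=> Hj; rewrite -fsum [in RHS](bigD1 j) //= fA1 //; lra. Qed.

Lemma fA01 i : fA i 0 * fA i 0 = fA i 0.
Proof. by rewrite fAE; case: (m <= i)%N; rewrite ?mulr1 ?mulr0. Qed.

Lemma fA_ge0 i : 0 <= fA i 0. Proof. by rewrite fAE; case: (m <= i)%N. Qed.

Lemma NA_le (v : 'rV[R]_n) c : 0 <= c -> (forall i, `|v 0 i| <= c) -> NA v <= c.
Proof.
move=> c0 H; rewrite /NA /Nab ge_max; apply/andP; split.
  by rewrite /Sa big1 // => i _; rewrite mul0r.
by apply: bigmax_le => // i _; rewrite mul1r.
Qed.

Lemma L1 (z : 'rV[R]_n) : z *m fA = 1%:M -> forall j : 'I_n, (m <= j)%N ->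
  1 + (kA - 2) * z 0 j <= opnorm NA (Pz fA z).
Proof.
move=> zf j Hj.
pose v : 'rV[R]_n := \row_i (if i == j then 1 else - fA i 0).
have Nv : NA v <= 1.
  apply: NA_le => // i; rewrite mxE; case: eqP => _; first by rewrite normr1.
  by rewrite normrN fAE; case: (m <= i)%N; rewrite ?normr1 ?normr0.
have sv : \sum_i v 0 i * fA i 0 = 2 - kA.
  rewrite (bigD1 j) //= mxE eqxx fA1 // mul1r.
  rewrite (eq_bigr (fun i => - fA i 0)); last first.
    by move=> i /negbTE ij; rewrite mxE ij mulNr fA01.
  by rewrite sumrN fsumD //; lra.
apply: le_trans (opnorm_ge NA_norm NA_coord _ Nv).
apply: le_trans (NA_coord _ j); rewrite Pz_entry sv mxE eqxx.
by apply: le_trans (ler_norm _); lra.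
Qed.

Lemma Lb (z : 'rV[R]_n) : z *m fA = 1%:M -> cst <= opnorm NA (Pz fA z).
Proof.
move=> zf; set M := opnorm NA (Pz fA z).
have H : (kA - 2) * \sum_i z 0 i * fA i 0 <= \sum_i (M - 1) * fA i 0.
  rewrite mulr_sumr; apply: ler_sum => i _; rewrite mulrA.
  case: (leqP m i) => Hi; last by rewrite fA0 // !mulr0.
  rewrite fA1 // !mulr1; have := L1 zf Hi; rewrite -/M; lra.
move: H; rewrite zf_sum // -mulr_sumr fsum mulr1 => H.
have kp := kpos; rewrite /cst -(ler_pM2r kp) mulrBl divfK ?kneq0 //.
move: H; rewrite mulrBl mul1r; lra.
Qed.

Lemma U (z : 'rV[R]_n) : (forall j : 'I_n, (m <= j)%N -> z 0 j = 1 / kA) ->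
  (forall j : 'I_n, (j < m)%N -> `|z 0 j| <= epsA) -> opnorm NA (Pz fA z) <= cst.
Proof.
move=> Hz1 Hz2; apply: (opnorm_le NA_norm) => v Nv.
have kp := kpos; have k3' := k3.
have cst0 : 0 <= cst.
  rewrite /cst subr_ge0 ler_pdivrMr //; lra.
apply: NA_le => // j; rewrite Pz_entry.
have vi : forall i, `|v 0 i| <= 1 by move=> i; apply: le_trans (NA_coord v i) Nv.
set s := \sum_i v 0 i * fA i 0.
have sk : `|s| <= kA.
  rewrite -fsum; apply: le_trans (ler_norm_sum _ _ _) _; apply: ler_sum => i _.
  rewrite normrM (ger0_norm (fA_ge0 i)); apply: ler_piMl => //; exact: fA_ge0.
case: (leqP m j) => Hj.
  rewrite Hz1 //.
  set s' := \sum_(i | i != j) v 0 i * fA i 0.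
  have ss : s = v 0 j + s' by rewrite /s (bigD1 j) //= fA1 // mulr1.
  have s'k : `|s'| <= kA - 1.
    rewrite -(fsumD Hj); apply: le_trans (ler_norm_sum _ _ _) _; apply: ler_sum => i _.
    rewrite normrM (ger0_norm (fA_ge0 i)); apply: ler_piMl => //; exact: fA_ge0.
  have -> : v 0 j - s * (1 / kA) = ((kA - 1) * v 0 j - s') / kA.
    by rewrite ss; field; rewrite kneq0.
  rewrite normrM normfV (gtr0_norm kp) ler_pdivrMr //.
  have -> : cst * kA = 2 * kA - 2 by rewrite /cst; field; rewrite kneq0.
  apply: le_trans (ler_normB _ _) _; rewrite normrM (@ger0_norm _ (kA - 1)); last by lra.
  have : (kA - 1) * `|v 0 j| <= (kA - 1) * 1 by apply: ler_wpM2l; [lra | exact: vi].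
  lra.
apply: le_trans (ler_normB _ _) _; rewrite normrM.
have := vi j; have := Hz2 _ Hj; have : 0 <= `|s| by [].
have : 0 <= `|z 0 j| by [].
have Hk : kA * epsA = (kA - 2) / kA by rewrite /epsA; field; rewrite kneq0.
have Hc : cst = 1 + (kA - 2) / kA by rewrite /cst; field; rewrite kneq0.
move=> h1 h2 h3 h4.
have : `|s| * `|z 0 j| <= kA * epsA.
  apply: le_trans (_ : `|s| * epsA <= _); first by apply: ler_wpM2l.
  by apply: ler_wpM2r => //; apply: le_trans h3; exact: normr_ge0.
lra.
Qed.

Lemma z0AE (j : 'I_n) : z0A 0 j = fA j 0 / kA.
Proof. by rewrite !mxE. Qed.

Lemma z0Af : z0A *m fA = 1%:M.
Proof.
apply: sum_zf; rewrite (eq_bigr (fun i => fA i 0 / kA)); last first.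
  by move=> i _; rewrite z0AE mulrAC fA01.
by rewrite -mulr_suml fsum divff // kneq0.
Qed.

Lemma epsA_gt0 : 0 < epsA.
Proof. have := k3; have kp := kpos; rewrite /epsA => ?; apply: divr_gt0; [lra | exact: mulr_gt0]. Qed.

Lemma opz0 : opnorm NA (Pz fA z0A) = cst.
Proof.
apply/le_anti/andP; split; last exact: Lb z0Af.
apply: U => j Hj; rewrite z0AE.
  by rewrite fA1.
by rewrite fA0 // mul0r normr0 ltW // epsA_gt0.
Qed.

Lemma H2A (z : 'rV[R]_n) : z *m fA = 1%:M -> opnorm NA (Pz fA z) <= opnorm NA (Pz fA z0A) ->
  forall j : 'I_n, (m <= j)%N -> z 0 j = z0A 0 j.
Proof.
rewrite opz0 => zf Hle.
have kp := kpos; have k3' := k3.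
have Hzj : forall j : 'I_n, (m <= j)%N -> z 0 j <= 1 / kA.
  move=> j Hj; have := L1 zf Hj; have : cst = 1 + (kA - 2) * (1 / kA).
    by rewrite /cst; field; rewrite kneq0.
  move=> Hc H; have : (kA - 2) * z 0 j <= (kA - 2) * (1 / kA) by lra.
  by rewrite ler_pM2l //; lra.
have Hs : \sum_i fA i 0 * (1 / kA - z 0 i) = 0.
  rewrite (eq_bigr (fun i => fA i 0 / kA - z 0 i * fA i 0)); last by move=> i _; rewrite mulrBr [z 0 i * _]mulrC mulrA mulr1.
  rewrite sumrB -mulr_suml fsum divff ?kneq0 // zf_sum //; lra.
have Hnn : forall i : 'I_n, xpredT i -> 0 <= fA i 0 * (1 / kA - z 0 i).
  move=> i _; case: (leqP m i) => Hi; last by rewrite fA0 // mul0r.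
  by rewrite fA1 // mul1r subr_ge0 Hzj.
move=> j Hj; have := @psumr_eq0P _ _ xpredT _ Hnn Hs j isT.
by rewrite fA1 // mul1r z0AE fA1 // => /eqP; rewrite subr_eq0 => /eqP <-.
Qed.

Lemma caseA : exists (N : 'rV[R]_n -> R) (Y : 'M[R]_n),
  [/\ is_norm N, \rank Y = n.-1, affine_dim_eq (Pmin N Y) m & 1 < proj_const N Y].
Proof.
have pn : (n.-1 < n)%N by rewrite ltn_predL; lia.
pose p := Ordinal pn.
have fp : fA p 0 = 1 by rewrite fA1 //= ; lia.
have Hm : (m <= n)%N by lia.
have Hf : forall j : 'I_n, (j < m)%N -> fA j 0 = 0 by move=> j; apply: fA0.
have H1 : forall z, z *m fA = 1%:M -> opnorm NA (Pz fA z0A) <= opnorm NA (Pz fA z).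
  by move=> z zf; rewrite opz0; apply: Lb.
have H3 : forall j : 'I_n, (j < m)%N ->
    opnorm NA (Pz fA (z0A + epsA *: delta_mx 0 j)) <= opnorm NA (Pz fA z0A).
  move=> j Hj; rewrite opz0; apply: U => i Hi; rewrite mxE z0AE [(epsA *: delta_mx 0 j : 'rV[R]_n) 0 i]mxE [(delta_mx 0 j : 'rV[R]_n) 0 i]mxE.
    have -> : (i == j) = false by apply/eqP => E; move: Hi; rewrite E leqNgt Hj.
    by rewrite fA1 // mulr0 addr0.
  rewrite fA0 // mul0r add0r normrM (gtr0_norm epsA_gt0).
  by rewrite eqxx /=; case: (i == j); rewrite ?normr1 ?normr0 ?mulr1 ?mulr0 // ltW // epsA_gt0.
exists NA, (kermx fA); split.
- exact: NA_norm.
- exact: rank_ker fp.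
- exact: (affdim fp z0Af epsA_gt0 Hm Hf H1 (@H2A) H3).
rewrite (PC fp z0Af H1) opz0 /cst.
have k3' := k3; have kp := kpos.
rewrite -subr_gt0 (_ : 2 - 2 / kA - 1 = (kA - 2) / kA); last by field; rewrite kneq0.
by apply: divr_gt0 => //; lra.
Qed.
End CaseA.

Section CaseB.
Variables (R : realType) (n m : nat).
Hypothesis Hmn : (m < n)%N.
Definition mo : 'I_n := Ordinal Hmn.
Definition aB : 'I_n -> bool := fun i => (i <= m)%N.
Definition bB : 'I_n -> bool := fun i => (m < i)%N.
Definition NB := Nab (R := R) aB bB.
Definition fB : 'cV[R]_n := \col_i ((i == mo)%:R).
Definition ed (j : 'I_n) : 'rV[R]_n := delta_mx 0 j.

Lemma HabB i : aB i || bB i. Proof. by rewrite /aB /bB; case: leqP. Qed.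
Lemma NB_norm : is_norm NB. Proof. exact: (@Nab_norm R n aB bB HabB). Qed.
Lemma NB_coord (v : 'rV[R]_n) i : `|v 0 i| <= NB v. Proof. exact: (@Nab_coord R n aB bB HabB v i). Qed.

Lemma edE (j i : 'I_n) : ed j 0 i = (i == j)%:R.
Proof. by rewrite mxE eqxx. Qed.

Lemma fBE i : fB i 0 = (i == mo)%:R. Proof. by rewrite mxE. Qed.

Lemma fB_sum (v : 'rV[R]_n) : \sum_i v 0 i * fB i 0 = v 0 mo.
Proof.
rewrite (bigD1 mo) //= big1 ?addr0; first by rewrite fBE eqxx mulr1.
by move=> i /negbTE H; rewrite fBE H mulr0.
Qed.

Lemma fBp : fB mo 0 = 1. Proof. by rewrite fBE eqxx. Qed.

Lemma zfB (z : 'rV[R]_n) : z *m fB = 1%:M -> z 0 mo = 1.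
Proof. by move/zf_sum; rewrite fB_sum. Qed.

Lemma UB (z' : 'rV[R]_n) : z' 0 mo = 0 -> (forall i : 'I_n, (m < i)%N -> z' 0 i = 0) ->
  Sa aB z' <= 1 -> opnorm NB (Pz fB (ed mo + z')) <= 1.
Proof.
move=> zm zi zs; apply: (opnorm_le NB_norm) => v Nv; apply: le_trans Nv.
have Pe : forall i, (v *m Pz fB (ed mo + z')) 0 i = v 0 i - v 0 mo * (i == mo)%:R - v 0 mo * z' 0 i.
  by move=> i; rewrite Pz_entry fB_sum mxE edE mulrDr opprD addrA.
rewrite /NB /Nab !ge_max !le_max; apply/andP; split; apply/orP; [left|right].
  have am : aB mo by rewrite /aB.
  apply: le_trans (_ : \sum_i (aB i)%:R * (`|v 0 i| - `|v 0 mo| * (i == mo)%:R + `|v 0 mo| * `|z' 0 i|) <= _).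
    apply: ler_sum => i _; apply: ler_wpM2l => //; rewrite Pe.
    case: (eqVneq i mo) => [->|im]; first by rewrite zm !mulr1 !subrr mulr0 subr0 normr0 mulr0 addr0.
    rewrite /= ?mulr0n !mulr0 !subr0 -normrM; apply: ler_normB.
  rewrite (eq_bigr (fun i => (aB i)%:R * `|v 0 i| - `|v 0 mo| * ((aB i)%:R * (i == mo)%:R) + `|v 0 mo| * ((aB i)%:R * `|z' 0 i|))); last first.
    by move=> i _; rewrite mulrDr mulrBr; congr (_ - _ + _); rewrite mulrCA.
  have Sd : \sum_i (aB i)%:R * (i == mo)%:R = 1 :> R.
    rewrite (bigD1 mo) //= big1 ?addr0; first by rewrite am eqxx mulr1.
    by move=> i /negbTE ->; rewrite mulr0.
  rewrite big_split /= sumrB -!mulr_sumr Sd mulr1 -/(Sa aB v) -/(Sa aB z').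
  have : `|v 0 mo| * Sa aB z' <= `|v 0 mo| * 1 by apply: ler_wpM2l.
  lra.
apply: bigmax_le; first exact: Bb_ge0.
move=> i _; apply: le_trans (Bb_ge bB v i); rewrite Pe.
rewrite /bB; case: ltnP => Hi; last by rewrite !mul0r.
have im : (i == mo) = false by apply/negbTE; apply/eqP => E; move: Hi; rewrite E /= ltnn.
by rewrite im zi // !mulr0 !subr0.
Qed.

Lemma Pz0 : opnorm NB (Pz fB (ed mo)) <= 1.
Proof.
have := @UB 0; rewrite addr0; apply; first by rewrite mxE.
  by move=> i _; rewrite mxE.
rewrite /Sa big1 ?ler01 // => i _; by rewrite mxE normr0 mulr0.
Qed.

Lemma LB (j : 'I_n) (z : 'rV[R]_n) : j != mo -> 1 <= opnorm NB (Pz fB z).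
Proof.
move=> jm; apply: (opnorm_ge1 NB_norm NB_coord (v := ed j)).
  by apply/eqP => /rowP /(_ j); rewrite edE eqxx mxE => /eqP; rewrite oner_eq0.
have e0 : ed j 0 mo = 0 by rewrite edE eq_sym (negbTE jm).
by apply/rowP => i; rewrite Pz_entry fB_sum e0 mul0r subr0.
Qed.

Lemma H2B (z : 'rV[R]_n) : z *m fB = 1%:M -> opnorm NB (Pz fB z) <= opnorm NB (Pz fB (ed mo)) ->
  forall j : 'I_n, (m <= j)%N -> z 0 j = ed mo 0 j.
Proof.
move=> zf Hle j Hj; have Hop := le_trans Hle Pz0.
case: (eqVneq j mo) => [->|jm]; first by rewrite zfB // edE eqxx.
have Hj' : (m < j)%N by rewrite ltn_neqAle Hj andbT; apply: contra jm => /eqP E; apply/eqP/val_inj.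
rewrite edE (negbTE jm).
have T : forall s : R, `|s| = 1 -> `|1 - s * z 0 j| <= 1.
  move=> s s1; pose v := ed j + s *: ed mo.
  have vE : forall i, v 0 i = (i == j)%:R + s * (i == mo)%:R by move=> i; rewrite !mxE !eqxx.
  have Nv : NB v <= 1.
    rewrite /NB /Nab ge_max; apply/andP; split.
      rewrite /Sa (bigD1 mo) //= big1 ?addr0.
        have mj : (mo == j) = false by rewrite eq_sym (negbTE jm).
        by rewrite vE eqxx mj add0r mulr1 s1 /aB /= leqnn mulr1.
      move=> i im; rewrite vE (negbTE im) mulr0 addr0 /aB.
      case: leqP => Hi; last by rewrite mul0r.
      have -> : (i == j) = false by apply/eqP => E; move: Hi; rewrite E leqNgt Hj'.
      by rewrite normr0 mulr0.
    apply: bigmax_le => // i _; rewrite vE.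
    case: (eqVneq i j) => [->|ij]; first by rewrite (negbTE jm) mulr0 addr0 normr1 mulr1 /bB; case: (_ < _)%N.
    by rewrite add0r normrM s1; case: (i == mo); rewrite /bB ?normr1 ?normr0 ?mulr1 ?mulr0; case: (_ < _)%N.
  apply: le_trans Hop; apply: le_trans (opnorm_ge NB_norm NB_coord _ Nv).
  have vj : v 0 j = 1 by rewrite vE eqxx (negbTE jm) mulr0 addr0.
  have vm : v 0 mo = s by rewrite vE eqxx eq_sym (negbTE jm) add0r mulr1.
  by apply: le_trans (NB_coord _ j); rewrite Pz_entry fB_sum vj vm.
have n1 : `|(-1 : R)| = 1 by rewrite normrN normr1.
have := T 1 (normr1 R); have := T (-1) n1.
rewrite mul1r mulN1r opprK !ler_norml /= mulr0n => /andP[_ h1] /andP[_ h2]; lra.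
Qed.
Lemma caseB : exists (N : 'rV[R]_n -> R) (Y : 'M[R]_n),
  [/\ is_norm N, \rank Y = n.-1 & affine_dim_eq (Pmin N Y) m].
Proof.
have fp : fB mo 0 = 1 := fBp.
have Hz0 : ed mo *m fB = 1%:M by apply: sum_zf; rewrite fB_sum edE eqxx.
have Hm : (m <= n)%N by apply: ltnW.
have Hf : forall j : 'I_n, (j < m)%N -> fB j 0 = 0 :> R.
  move=> j Hj; rewrite fBE; have -> : (j == mo) = false; last by [].
  by apply/eqP => E; move: Hj; rewrite E /= ltnn.
have H1 : forall z, z *m fB = 1%:M ->
    opnorm (NB) (Pz (fB) (ed mo)) <= opnorm (NB) (Pz (fB) z).
  move=> z zf; case: (boolP [exists j : 'I_n, j != mo]) => [/existsP [j jm] | /existsPn H].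
    by apply: le_trans Pz0 (LB _ jm).
  have -> : z = ed mo; last by [].
  apply/rowP => i; have := H i; rewrite negbK => /eqP ->.
  by rewrite (zfB zf) edE eqxx.
have H3 : forall j : 'I_n, (j < m)%N ->
    opnorm (NB) (Pz (fB) (ed mo + 1 *: delta_mx 0 j)) <= opnorm (NB) (Pz (fB) (ed mo)).
  move=> j Hj.
  have jm : j != mo by apply/eqP => E; move: Hj; rewrite E /= ltnn.
  apply: le_trans (LB _ jm); rewrite scale1r.
  apply: (UB (z' := ed j)).
  - by rewrite edE (negbTE (negbT (_ : (mo == j) = false))) //; apply/negbTE; rewrite eq_sym.
  - move=> i Hi; rewrite edE; have -> : (i == j) = false; last by [].
    by apply/eqP => E; move: Hi; rewrite E ltnNge ltnW.
  rewrite /Sa (bigD1 j) //= big1 ?addr0.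
    by rewrite edE eqxx normr1 mulr1 /aB; case: (_ <= _)%N.
  by move=> i /negbTE ij; rewrite edE ij normr0 mulr0.
exists (NB), (kermx (fB)); split.
- exact: NB_norm.
- exact: rank_ker fp.
exact: (affdim fp Hz0 ltr01 Hm Hf H1 H2B H3).
Qed.
End CaseB.

Unset Implicit Arguments.
Local Close Scope classical_set_scope.

Theorem mainTheorem4 (R : realType) (n m : nat) :
  (0 < n)%N -> (m <= n.-1)%N ->
  exists (N : 'rV[R]_n -> R) (Y : 'M[R]_n),
    [/\ is_norm N, \rank Y = n.-1, affine_dim_eq (Pmin N Y) m &
        ((m + 3 <= n)%N -> 1 < proj_const N Y)].
Proof.
move=> n0 mn.
case: (boolP (m + 3 <= n)%N) => H.
  have [N [Y [? ? ? ?]]] := caseA R H.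
  by exists N, Y; split.
have Hmn : (m < n)%N by lia.
have [N [Y [? ? ?]]] := caseB R Hmn.
by exists N, Y; split => // H'; rewrite H' in H.
Qed.
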